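(* Let $\mathbb{K}\in\{\mathbb{R},\mathbb{C}\}$ and let $\{T_j\}_{j=1}^n\subset\mathbb{K}^{d\times r}$ be a g-frame with g-frame operator $S=\sum_{j=1}^nT_jT_j^*$. Then $\operatorname{trace}(T_j^*S^{-1}T_j)\le r$ for all $j=1,\ldots,n$. Moreover, if $\operatorname{trace}(T_j^*S^{-1}T_j)=r$ for some $j$, then $T_j$ has no zero columns and $\operatorname{range}(S^{-1/2}T_k)\perp\operatorname{range}(S^{-1/2}T_j)$ for all $k\neq j$.
   Context: A collection $\{T_j\}_{j=1}^n\subset\mathbb{K}^{d\times r}$ is a g-frame if there are constants $0<A\le B<\infty$ with $A\|x\|^2\le\sum_{j=1}^n\|T_j^*x\|^2\le B\|x\|^2$ for all $x\in\mathbb{K}^d$. $S^{-1/2}$ is the inverse of the positive definite square root of $S$. *)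

(* Defs.v *)
From HB Require Import structures.
From mathcomp Require Import all_boot all_order all_algebra.
Set Implicit Arguments. Unset Strict Implicit. Unset Printing Implicit Defensive.
Import Order.TTheory GRing.Theory Num.Theory.
Local Open Scope ring_scope.
Local Open Scope sesquilinear_scope.

(* The scalar field K is modelled inside a numClosedFieldType C (e.g. the
   complex numbers): [realK = false] means K = C, [realK = true] means
   K = R, i.e. all vectors/matrices are required to have real entries. *)

Definition Kmx (C : numClosedFieldType) (realK : bool) (m p : nat)
  (M : 'M[C]_(m, p)) : Prop := realK -> M \is a realmx.

Definition sqnorm (C : numClosedFieldType) (m : nat) (v : 'cV[C]_m) : C :=
  \sum_(i < m) `|v i 0| ^+ 2.

Definition is_gframe (C : numClosedFieldType) (realK : bool) (d r n : nat)
  (T : 'I_n -> 'M[C]_(d, r)) : Prop :=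
  exists A B : C, [/\ 0 < A, A <= B &
    forall x : 'cV[C]_d, Kmx realK x ->
      A * sqnorm x <= \sum_(j < n) sqnorm ((T j)^t* *m x) <= B * sqnorm x].

Definition gframe_op (C : numClosedFieldType) (d r n : nat)
  (T : 'I_n -> 'M[C]_(d, r)) : 'M[C]_d :=
  \sum_(j < n) (T j *m (T j)^t*).

Definition posdef (C : numClosedFieldType) (realK : bool) (d : nat)
  (P : 'M[C]_d) : Prop :=
  [/\ Kmx realK P, P^t* = P &
      forall x : 'cV[C]_d, Kmx realK x -> x != 0 -> 0 < (x^t* *m P *m x) 0 0].

Definition range_orth (C : numClosedFieldType) (realK : bool) (d p q : nat)
  (X : 'M[C]_(d, p)) (Y : 'M[C]_(d, q)) : Prop :=
  forall (u : 'cV[C]_p) (v : 'cV[C]_q), Kmx realK u -> Kmx realK v ->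
    (X *m u)^t* *m (Y *m v) = 0.

(* Main.v *)
Require Import Defs.
From HB Require Import structures.
From mathcomp Require Import all_boot all_order all_algebra.
From mathcomp Require Import ring.
Import Order.TTheory GRing.Theory Num.Theory.
Local Open Scope ring_scope.
Local Open Scope sesquilinear_scope.

Section Helpers.
Variable C : numClosedFieldType.

Lemma tCM m n p (A : 'M[C]_(m,n)) (B : 'M[C]_(n,p)) : (A *m B)^t* = B^t* *m A^t*.
Proof. by rewrite trmx_mul map_mxM. Qed.

Lemma tC_sum m n k (F : 'I_k -> 'M[C]_(m,n)) : (\sum_i F i)^t* = \sum_i (F i)^t*.
Proof.
apply/matrixP => a b; rewrite !(mxE, summxE) rmorph_sum.
by apply: eq_bigr => i _; rewrite !mxE.
Qed.

Lemma tCV n (A : 'M[C]_n) : (invmx A)^t* = invmx (A^t*).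
Proof. by rewrite trmx_inv map_invmx. Qed.

Lemma tCB m n (A B : 'M[C]_(m,n)) : (A - B)^t* = A^t* - B^t*.
Proof. by apply/matrixP => a b; rewrite !mxE rmorphB. Qed.

Lemma tC1 n : (1%:M : 'M[C]_n)^t* = 1%:M.
Proof. by rewrite trmx1 map_mx1. Qed.

Lemma tr_norm m n (X : 'M[C]_(m,n)) :
  \tr (X^t* *m X) = \sum_i \sum_k `|X k i| ^+ 2.
Proof.
rewrite /mxtrace; apply: eq_bigr => i _; rewrite mxE; apply: eq_bigr => k _.
by rewrite !mxE normCK mulrC.
Qed.

Lemma tr_norm_ge0 m n (X : 'M[C]_(m,n)) : 0 <= \tr (X^t* *m X).
Proof.
by rewrite tr_norm; apply: sumr_ge0 => i _; apply: sumr_ge0 => k _;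
  apply: exprn_ge0.
Qed.

Lemma tr_norm_eq0 m n (X : 'M[C]_(m,n)) : \tr (X^t* *m X) = 0 -> X = 0.
Proof.
rewrite tr_norm => /psumr_eq0P H; apply/matrixP => k i; rewrite mxE.
have H1 : forall i, \sum_k `|X k i| ^+ 2 = 0.
  move=> i'; apply: H => // i'' _; apply: sumr_ge0 => l _; apply: exprn_ge0; apply: normr_ge0.
move/psumr_eq0P: (H1 i) => /(_ (fun l _ => exprn_ge0 2 (normr_ge0 (X l i))) k isT).
by move=> /eqP; rewrite expf_eq0 /= normr_eq0 => /eqP.
Qed.
End Helpers.

Lemma sqnorm_tr (C : numClosedFieldType) m (v : 'cV[C]_m) : sqnorm v = \tr (v^t* *m v).
Proof. by rewrite tr_norm big_ord1. Qed.

Theorem proposition3p6 (C : numClosedFieldType) (realK : bool) (d r n : nat)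
  (T : 'I_n -> 'M[C]_(d, r)) :
  (forall j, Kmx realK (T j)) -> is_gframe realK T ->
  (forall j : 'I_n,
     \tr ((T j)^t* *m invmx (gframe_op T) *m T j) <= r%:R) /\
  (forall j : 'I_n,
     \tr ((T j)^t* *m invmx (gframe_op T) *m T j) = r%:R ->
     (forall i : 'I_r, col i (T j) != 0) /\
     (forall P : 'M[C]_d, posdef realK P -> P *m P = gframe_op T ->
        forall k : 'I_n, k != j ->
          range_orth realK (invmx P *m T k) (invmx P *m T j))).
Proof.
move=> HK [A [B [A0 AB Hf]]].
set S := gframe_op T.
have SH : S^t* = S.
  by rewrite /S /gframe_op tC_sum; apply: eq_bigr => j _; rewrite tCM trmxCK.
have quad : forall x : 'cV[C]_d, Kmx realK x -> S *m x = 0 -> x = 0.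
  move=> x Kx Sx; have /andP[H1 _] := Hf x Kx.
  have e : \sum_j sqnorm ((T j)^t* *m x) = \tr (x^t* *m (S *m x)).
    rewrite /S /gframe_op mulmx_suml mulmx_sumr raddf_sum.
    by apply: eq_bigr => j _; rewrite sqnorm_tr tCM trmxCK !mulmxA.
  rewrite e Sx mulmx0 linear0 in H1.
  have hx : 0 <= sqnorm x by rewrite sqnorm_tr tr_norm_ge0.
  have h0 : sqnorm x = 0.
    apply/eqP; rewrite eq_le hx andbT.
    by rewrite -(pmulr_rle0 _ A0).
  by apply: tr_norm_eq0; rewrite -sqnorm_tr.
have quad' : forall x : 'cV[C]_d, S *m x = 0 -> x = 0.
  case: realK HK Hf quad => HK Hf quad; last first.
    by move=> x; apply: quad.
  have Sreal : S \is a realmx.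
    rewrite /S /gframe_op; apply/mxOverP => a b; rewrite summxE.
    apply: rpred_sum => j _; apply: (mxOverP (mxOverM _ _)).
      exact: HK.
    apply/mxOverP => a' b'; rewrite !mxE.
    by have /CrealP -> := mxOverP (HK j isT) b' a'; apply: (mxOverP (HK j isT)).
  move=> x Sx.
  pose a := x ^ (@Re _); pose b := x ^ (@Im _).
  have areal : a \is a realmx by apply/mxOverP=> i j; rewrite !mxE Creal_Re.
  have breal : b \is a realmx by apply/mxOverP=> i j; rewrite !mxE Creal_Im.
  have xE : x = a + 'i *: b by apply/matrixP=> i j; rewrite !mxE -Crect.
  have e : S *m a + 'i *: (S *m b) = 0 + 'i *: 0.
    by rewrite scaler0 addr0 scalemxAr -mulmxDr -xE.
  have r0 : (0 : 'cV[C]_d) \is a realmx by apply: mxOver0; apply: real0.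
  case: (eqmx_ReiIm (mxOverM Sreal areal) (mxOverM Sreal breal) r0 r0 e) => ha hb.
  have ha' : a = 0 by apply: quad => //; move=> _.
  have hb' : b = 0 by apply: quad => //; move=> _.
  rewrite xE ha' hb'.
  by rewrite scaler0 addr0.
have Sunit : S \in unitmx.
  rewrite -unitmx_tr -row_free_unit -kermx_eq0 -submx0.
  apply/row_subP => i.
  have /sub_kermxP h := row_sub i (kermx S^T).
  have : S *m (row i (kermx S^T))^T = 0.
    by apply: trmx_inj; rewrite trmx_mul trmxK trmx0.
  by move/quad' => /(congr1 trmx); rewrite trmxK trmx0 => ->; rewrite sub0mx.
set Si := invmx S.
have SiH : Si^t* = Si by rewrite /Si tCV SH.
have SSi : S *m Si = 1%:M by apply: mulmxV.
pose M j := (T j)^t* *m Si *m T j.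
pose Bk j k := (T k)^t* *m Si *m T j.
have MH j : (M j)^t* = M j by rewrite /M !tCM trmxCK SiH mulmxA.
have sumB j : \sum_k (Bk j k)^t* *m Bk j k = M j.
  have e k : (Bk j k)^t* *m Bk j k =
      (T j)^t* *m Si *m (T k *m (T k)^t*) *m (Si *m T j).
    by rewrite /Bk !tCM trmxCK SiH !mulmxA.
  rewrite (eq_bigr _ (fun k _ => e k)) -mulmx_suml -mulmx_sumr -/(gframe_op T) -/S.
  by rewrite /M -!mulmxA (mulmxA S) SSi mul1mx.
have key j : r%:R - \tr (M j) = \tr ((1%:M - M j)^t* *m (1%:M - M j))
      + \sum_(k | k != j) \tr ((Bk j k)^t* *m Bk j k).
  have hs : \sum_(k | k != j) \tr ((Bk j k)^t* *m Bk j k)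
      = \tr (M j) - \tr (M j *m M j).
    have := congr1 mxtrace (sumB j); rewrite raddf_sum (bigD1 j) //=.
    by rewrite -/(M j) MH => <-; rewrite addrC addrK.
  rewrite hs tCB tC1 MH mulmxBl mulmxBr mul1mx !raddfB.
  rewrite /= mulmx1 mul1mx mxtrace1 opprK. ring.
split.
  move=> j; rewrite -subr_ge0 -/(M j) key; apply: addr_ge0.
    exact: tr_norm_ge0.
  by apply: sumr_ge0 => k _; apply: tr_norm_ge0.
move=> j /eqP; rewrite -/(M j) eq_sym -subr_eq0 key paddr_eq0; first last.
- by apply: sumr_ge0 => k _; apply: tr_norm_ge0.
- exact: tr_norm_ge0.
case/andP => /eqP/tr_norm_eq0/eqP; rewrite subr_eq0 => /eqP M1 /eqP hB.
have B0 : forall k, k != j -> Bk j k = 0.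
  move=> k kj; apply: tr_norm_eq0.
  move/psumr_eq0P: hB; apply => // l _; exact: tr_norm_ge0.
split.
  move=> i; apply/negP => /eqP ci.
  have : M j i i = 1 by rewrite -M1 mxE eqxx.
  rewrite /M mxE big1 ?(@eq_sym _ 0) ?oner_eq0 //.
    by move=> /eqP; rewrite eq_sym oner_eq0.
  move=> k _; have := congr1 (fun X : 'cV[C]_d => X k 0) ci; rewrite !mxE => ->.
  by rewrite mulr0.
move=> P [_ PH _] PP k kj u v _ _.
have Punit : P \in unitmx.
  by move: Sunit; rewrite -/S -PP unitmx_mul => /andP[].
have e : (invmx P)^t* *m invmx P = Si.
  have e3 : S *m (invmx P *m invmx P) = 1%:M.
    by rewrite -PP -mulmxA (mulmxA P (invmx P)) mulmxV // mul1mx mulmxV.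
  rewrite tCV PH -[LHS]mul1mx -(mulVmx Sunit) -mulmxA e3 mulmx1 //.
rewrite !tCM -!mulmxA (mulmxA ((invmx P)^t*)) e.
have := B0 k kj; rewrite /Bk => hb.
by rewrite (mulmxA Si) (mulmxA ((T k)^t*)) (mulmxA ((T k)^t*) Si) hb mul0mx mulmx0.
Qed.
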